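(* Let $\langle Q,A,\delta,\{q_0\},F\rangle$ be a transitive group automaton with $F\neq\emptyset$, let $k\in\mathbb{N}$, and let $\langle Q_k,A,\delta_k,I_k,F_k\rangle$ be the $k$-digit buffer over it. Let $x\in A^{\mathbb{N}}$ be normal and $s\in Q_k$. Then there is a subset $Q'\subseteq Q_k$ such that: $Q'$ is closed under $\delta_k$ and for all $s_1,s_2\in Q'$ there is a word $u\in A^*$ with $s_1\xrightarrow{u}s_2$ (i.e. the restricted automaton on $Q'$ is transitive); $F_k\cap Q'\neq\emptyset$; the second coordinate of $\widetilde{T}^i(x,s)$ lies in $Q'$ for all sufficiently large $i$; and every word in $A^k$ appears as the second coordinate of some element of $Q'$ (i.e. for each $v\in A^k$ there is $(q,v)\in Q'$).
   Context: An automaton is transitive if for all states $q_1,q_2$ there is a word $w$ with $q_1\xrightarrow{w}q_2$. A group automaton is a deterministic automaton in which, for each symbol $a$, the map $p\mapsto\delta(p,a)$ is a permutation of the states. The $k$-digit buffer over $\langle Q,A,\delta,\{q_0\},F\rangle$ is the automaton with state set $Q_k=Q\times A^k$, final states $F_k=F\times A^k$, initial state set $I_k=\{(q_0,w_0)\}$ for some fixed $w_0\in A^k$, and transition function $\delta_k((q,w),a)=(\delta(q,a),w)$ if $\delta(q,a)\notin F$, and $\delta_k((q,w),a)=(\delta(q,a),w[2..k]a)$ if $\delta(q,a)\in F$. For $X=A^{\mathbb{N}}$ with shift $T$ ($(Tx)_i=x_{i+1}$), the augmented map on $X\times Q_k$ is $\widetilde{T}(x,s)=(Tx,\delta_k(s,x_1))$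 where $x=x_1x_2\cdots$. A sequence $x$ is normal if every word $w\in A^*$ occurs in $x$ with limiting frequency $(\#A)^{-|w|}$. *)

(* Defs.v *)
From HB Require Import structures.
From mathcomp Require Import all_boot all_order all_algebra.
Set Implicit Arguments. Unset Strict Implicit. Unset Printing Implicit Defensive.
Import Order.TTheory GRing.Theory Num.Theory.

Definition run (S A : Type) (d : S -> A -> S) (s : S) (w : seq A) : S := foldl d s w.

Definition transitive_aut (S A : Type) (d : S -> A -> S) : Prop :=
  forall s1 s2 : S, exists w : seq A, run d s1 w = s2.

Definition group_aut (S A : finType) (d : S -> A -> S) : Prop :=
  forall a : A, bijective (fun p => d p a).

Definition buf_shift (A : Type) (k : nat) (w : k.-tuple A) (a : A) : k.-tuple A :=
  [tuple of behead (rcons w a)].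

Definition buffer_delta (Q A : finType) (delta : Q -> A -> Q) (F : {set Q})
    (k : nat) (s : Q * k.-tuple A) (a : A) : Q * k.-tuple A :=
  let q' := delta s.1 a in
  if q' \in F then (q', buf_shift s.2 a) else (q', s.2).

Definition buffer_final (Q A : finType) (F : {set Q}) (k : nat) : {set Q * k.-tuple A} :=
  [set s | s.1 \in F].

(* prefix x_1 ... x_n of a sequence x : nat -> A (x_1 is x 0) *)
Definition prefix (A : Type) (x : nat -> A) (n : nat) : seq A := mkseq x n.

(* number of occurrences of w starting at positions 1..n of x *)
Definition occ (A : eqType) (x : nat -> A) (w : seq A) (n : nat) : nat :=
  count (fun i => mkseq (fun j => x (i + j)%N) (size w) == w) (iota 0 n).

Definition normal (A : finType) (x : nat -> A) : Prop :=
  forall (w : seq A) (eps : rat), (0 < eps)%R ->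
    exists N : nat, forall n : nat, (N <= n)%N ->
      (`| (occ x w n)%:R / n%:R - ((#|A|%:R) ^+ (size w))^-1 | < eps)%R.

(* second coordinate of T~^i (x, s) *)
Definition aug_state (Q A : finType) (delta : Q -> A -> Q) (F : {set Q}) (k : nat)
    (x : nat -> A) (s : Q * k.-tuple A) (i : nat) : Q * k.-tuple A :=
  run (buffer_delta delta F (k:=k)) s (prefix x i).

(* Main.v *)
Require Import Defs.
From HB Require Import structures.
From mathcomp Require Import all_boot all_order all_algebra.
Set Implicit Arguments. Unset Strict Implicit. Unset Printing Implicit Defensive.
Import Order.TTheory GRing.Theory Num.Theory.

Definition erel (S A : finType) (d : S -> A -> S) : rel S :=
  fun p q => [exists a, d p a == q].

Lemma run_cat (S A : Type) (d : S -> A -> S) p u v :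
  run d p (u ++ v) = run d (run d p u) v.
Proof. exact: foldl_cat. Qed.

Lemma run_connect (S A : finType) (d : S -> A -> S) p u :
  connect (erel d) p (run d p u).
Proof.
elim: u p => [|a u IH] p /=; first exact: connect0.
apply: connect_trans (IH (d p a)); apply: connect1; apply/existsP; by exists a.
Qed.

Lemma connect_run (S A : finType) (d : S -> A -> S) p q :
  connect (erel d) p q -> exists u, run d p u = q.
Proof.
case/connectP=> ps; elim: ps p => [|c ps IH] p /=; first by move=> _ ->; exists [::].
case/andP=> /existsP [a /eqP Ha] Hp Hq.
have [u Hu] := IH c Hp Hq; exists (a :: u); by rewrite /= Ha.
Qed.

Definition bottom (S A : finType) (d : S -> A -> S) q :=
  forall r, connect (erel d) q r -> connect (erel d) r q.

Lemma exists_bottom (S A : finType) (d : S -> A -> S) p :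
  exists q, connect (erel d) p q /\ bottom d q.
Proof.
pose R q := #|[set r | connect (erel d) q r]|.
case: (arg_minnP R (connect0 (erel d) p)) => q Hpq Hmin.
exists q; split => // r Hqr.
have Hsub : [set t | connect (erel d) r t] \subset [set t | connect (erel d) q t].
  apply/subsetP => t; rewrite !inE => Hrt; exact: connect_trans Hqr Hrt.
have Hle := Hmin r (connect_trans Hpq Hqr).
have : [set t | connect (erel d) r t] = [set t | connect (erel d) q t].
  apply/eqP; by rewrite eqEcard Hsub Hle.
move/setP/(_ q); rewrite !inE connect0 => -> //.
Qed.

Lemma bottom_connect (S A : finType) (d : S -> A -> S) q r :
  bottom d q -> connect (erel d) q r -> bottom d r.
Proof.
move=> Hq Hqr t Hrt.
exact: connect_trans (Hq t (connect_trans Hqr Hrt)) Hqr.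
Qed.

Lemma exists_W (S A : finType) (d : S -> A -> S) (ps : seq S) :
  exists W, forall p, p \in ps -> bottom d (run d p W).
Proof.
elim: ps => [|p ps [W HW]]; first by exists [::].
have [q [Hq Hb]] := exists_bottom d (run d p W).
have [u Hu] := connect_run Hq.
exists (W ++ u) => p0; rewrite inE => /orP [/eqP -> | Hp0].
  by rewrite run_cat Hu.
rewrite run_cat; apply: bottom_connect (HW _ Hp0) _; exact: run_connect.
Qed.

Lemma run_fst (Q A : finType) (delta : Q -> A -> Q) (F : {set Q}) (k : nat) p u :
  (run (buffer_delta delta F (k:=k)) p u).1 = run delta p.1 u.
Proof.
elim: u p => [|a u IH] p //=; rewrite IH; congr run.
by rewrite /buffer_delta; case: ifP.
Qed.

Lemma push1 (Q A : finType) (delta : Q -> A -> Q) (F : {set Q}) (k : nat)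
  (Htrans : transitive_aut delta) (Hgroup : group_aut delta) f (Hf : f \in F)
  (p : Q * k.-tuple A) a :
  exists u, run (buffer_delta delta F (k:=k)) p (u ++ [:: a]) =
            (f, buf_shift (run (buffer_delta delta F (k:=k)) p u).2 a).
Proof.
have [g Hg1 Hg2] := Hgroup a.
have [u Hu] := Htrans p.1 (g f).
exists u; rewrite run_cat /= /buffer_delta run_fst Hu Hg2 Hf //.
Qed.

Lemma powpush (Q A : finType) (delta : Q -> A -> Q) (F : {set Q}) (k : nat)
  (Hgroup : group_aut delta) (p : Q * k.-tuple A) a (Hp : p.1 \in F) :
  exists u, (run (buffer_delta delta F (k:=k)) p u).1 \in F /\
            (run (buffer_delta delta F (k:=k)) p u).2 = buf_shift p.2 a.
Proof.
pose fa := fun q => delta q a.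
have inj : injective fa by have [g H1 _] := Hgroup a; exact: can_inj H1.
have exP : exists m, (0 < m) && (iter m fa p.1 \in F).
  exists (order fa p.1); by rewrite order_gt0 iter_order.
case: (ex_minnP exP) => m /andP [Hm0 HmF] Hmin.
have Hlt : forall n, n < m -> run (buffer_delta delta F (k:=k)) p (nseq n a) = (iter n fa p.1, p.2).
  elim=> [|n IH] Hn; first by case: p Hp {Hmin HmF exP} => [].
  rewrite -addn1 nseqD run_cat IH ?(ltn_trans (ltnSn n)) //=.
  rewrite /buffer_delta /= ifF ?addn1 //.
  apply/negbTE/negP => Hin.
  have := Hmin n.+1; rewrite /= Hin => /(_ isT); rewrite leqNgt Hn //.
exists (nseq m a).
have Hm : m = m.-1 + 1 by rewrite addn1 prednK.
rewrite Hm nseqD run_cat Hlt; last by rewrite {2}Hm addn1 ltnSn.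
rewrite /= /buffer_delta /=.
have -> : delta (iter m.-1 fa p.1) a = iter m fa p.1 by rewrite {2}Hm addn1.
by rewrite HmF.
Qed.

Lemma drop_shift (A : Type) (b l : seq A) a :
  drop (size l) (behead (rcons b a) ++ l) = drop (size l).+1 (b ++ a :: l).
Proof.
case: b => [|c b] /=; first by rewrite drop_size.
by rewrite -cats1 -catA.
Qed.

Lemma pushL (Q A : finType) (delta : Q -> A -> Q) (F : {set Q}) (k : nat)
  (Hgroup : group_aut delta) (l : seq A) : forall (p : Q * k.-tuple A), p.1 \in F ->
  exists u, val (run (buffer_delta delta F (k:=k)) p u).2 = drop (size l) (val p.2 ++ l)
    /\ (run (buffer_delta delta F (k:=k)) p u).1 \in F.
Proof.
elim: l => [|a l IH] p Hp.
  by exists [::]; rewrite cats0 drop0.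
have [u [Hu1 Hu2]] := powpush Hgroup a Hp.
have [u' [Hu'1 Hu'2]] := IH _ Hu1.
exists (u ++ u'); rewrite run_cat; split => //.
by rewrite Hu'1 Hu2 /= drop_shift.
Qed.

Lemma prefixD (A : Type) (x : nat -> A) i n :
  Defs.prefix x (i + n) = Defs.prefix x i ++ mkseq (fun j => x (i + j)) n.
Proof. by rewrite /Defs.prefix /mkseq iotaD map_cat add0n; congr (_ ++ _); rewrite -{1}(addn0 i) iotaDl -map_comp. Qed.

Lemma occ_pos (A : finType) (x : nat -> A) (Hx : normal x) (W : seq A) :
  exists i, mkseq (fun j => x (i + j)) (size W) = W.
Proof.
have HA : (0 < #|A|)%N by apply/card_gt0P; exists (x 0).
pose c : rat := ((#|A|%:R) ^+ size W)^-1.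
have Hc : (0 < c)%R by rewrite invr_gt0 exprn_gt0 // ltr0n.
have [N HN] := Hx W c Hc.
have := HN N (leqnn N).
case E : (occ x W N) => [|m].
  by rewrite mul0r add0r normrN gtr0_norm // ltxx.
move=> _.
have : has (fun i => mkseq (fun j => x (i + j)) (size W) == W) (iota 0 N).
  by rewrite has_count; move: E; rewrite /occ => ->.
by case/hasP => i _ /eqP Hi; exists i.
Qed.

Theorem lemma4p2 (Q A : finType) (delta : Q -> A -> Q) (q0 : Q) (F : {set Q})
  (k : nat) (w0 : k.-tuple A)
  (Htrans : transitive_aut delta) (Hgroup : group_aut delta)
  (HF : F != set0)
  (x : nat -> A) (Hx : normal x) (s : Q * k.-tuple A) :
  exists Q' : {set Q * k.-tuple A},
    [/\ (forall s1, s1 \in Q' -> forall a : A, buffer_delta delta F s1 a \in Q'),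
        (forall s1 s2, s1 \in Q' -> s2 \in Q' ->
           exists u : seq A, run (buffer_delta delta F (k:=k)) s1 u = s2),
        @buffer_final Q A F k :&: Q' != set0,
        (exists N : nat, forall i : nat, (N <= i)%N -> aug_state delta F x s i \in Q') &
        (forall v : k.-tuple A, exists q : Q, (q, v) \in Q')].
Proof.
set d := buffer_delta delta F (k:=k).
have [f Hf] : exists f, f \in F by apply/set0Pn.
have [W HW] := exists_W d (enum [set: (Q * k.-tuple A)%type]).
have [i Hi] := occ_pos Hx W.
pose t := aug_state delta F x s (i + size W).
have Ht : bottom d t.
  rewrite /t /aug_state prefixD Hi run_cat; apply: HW; by rewrite mem_enum inE.
exists [set r | connect (erel d) t r]; split.
- move=> s1 Hs1 a; rewrite inE in Hs1; rewrite inE; apply: (connect_trans Hs1).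
  apply: connect1; apply/existsP; by exists a.
- move=> s1 s2; rewrite !inE => Hs1 Hs2; apply: connect_run.
  exact: connect_trans (Ht _ Hs1) Hs2.
- have [u Hu] := push1 (k:=k) Htrans Hgroup Hf t (x 0).
  apply/set0Pn; exists (run d t (u ++ [:: x 0])); rewrite !inE run_connect andbT.
  by rewrite /d Hu.
- exists (i + size W) => j Hj; rewrite inE.
  rewrite -(subnKC Hj) /aug_state prefixD run_cat; exact: run_connect.
- move=> v.
  have [u Hu] := push1 (k:=k) Htrans Hgroup Hf t (x 0).
  have Hp : (run d t (u ++ [:: x 0])).1 \in F by rewrite /d Hu.
  have [u' [Hu'1 Hu'2]] := pushL Hgroup (val v) Hp.
  exists (run d t ((u ++ [:: x 0]) ++ u')).1; rewrite inE.
  have -> : v = (run d t ((u ++ [:: x 0]) ++ u')).2.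
    apply: val_inj; rewrite /= run_cat Hu'1 drop_size_cat // !size_tuple //.
  rewrite -surjective_pairing; exact: run_connect.
Qed.
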